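(* Let $(A,\succ,\prec)$ be an anti-pre-Novikov algebra and $s\in A\otimes A$ define a factorizable anti-pre-Novikov bialgebra $(A,\succ,\prec,\Delta_{\succ,s},\Delta_{\prec,s})$. Consider the direct sum anti-pre-Novikov algebra $A\oplus A$ (componentwise operations) and the linear map $T_s\oplus T_{\tau(s)}:A^*\to A\oplus A$, $\zeta\mapsto(T_s(\zeta),-T_{\tau(s)}(\zeta))$. Then $\mathrm{Im}(T_s\oplus T_{\tau(s)})$ is an anti-pre-Novikov subalgebra of $A\oplus A$ isomorphic to the anti-pre-Novikov algebra $(A^*,\succ_s,\prec_s)$. Furthermore, every $x\in A$ has a unique decomposition $x=x_1-x_2$ with $(x_1,x_2)\in\mathrm{Im}(T_s\oplus T_{\tau(s)})$.
   Context: $A$ is finite-dimensional over a field $k$. An anti-pre-Novikov algebra is $(A,\succ,\prec)$ such that with $x\circ y=x\succ y+x\prec y$: $(x\circ y-y\circ x)\succ z=y\succ(x\succ z)-x\succ(y\succ z)$; $x\prec(y\circ z)=(y\succ x)\prec z-(x\prec y)\prec z-y\succ(x\prec z)$; $(x\circ y)\succ z=-(x\succ z)\prec y$; $(x\prec y)\prec z=(x\prec z)\prec y$; $(x\circ y-y\circ x)\prec z=x\succ(y\circ z)-y\succ(x\circ z)$. Notation: $x\odot y=x\succ y+y\prec x$; $L_\ast(x)y=x\ast y$, $R_\ast(x)y=y\ast x$; $L_{\star}=L_{\circ}+R_{\circ}$, $L_{\odot}=L_{\succ}+R_{\prec}$, $R_{\odot}=R_{\succ}+L_{\prec}$; for $f:A\to\mathrm{End}(A)$,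 $\langle f^*(x)\zeta,y\rangle=-\langle\zeta,f(x)y\rangle$; $\tau$ is the flip; $T_r:A^*\to A$, $\langle T_r(\zeta),\eta\rangle=\langle r,\zeta\otimes\eta\rangle$. $r$ is invariant if $(I\otimes L_{\star}(x)-L_{\succ}(x)\otimes I)r=0$ and $(L_{\circ}(x)\otimes I-I\otimes L_{\odot}(x))r=0$ for all $x$. For $s=\sum_i a_i\otimes b_i$ the APN-YBE is $\sum_{i,j}a_i\circ a_j\otimes b_i\otimes b_j+\sum_{i,j}a_j\otimes a_i\otimes(b_i\odot b_j)+\sum_{i,j}a_i\otimes(b_i\prec a_j)\otimes b_j=0$. With $\Delta_{\succ,s}(x)=(I\otimes L_{\star}(x)-L_{\succ}(x)\otimes I)s$, $\Delta_{\prec,s}(x)=(L_{\circ}(x)\otimes I-I\otimes L_{\odot}(x))s$, the datum $(A,\succ,\prec,\Delta_{\succ,s},\Delta_{\prec,s})$ is a factorizable anti-pre-Novikov bialgebra when $s$ solves the APN-YBE, $s+\tau(s)$ is invariant and $T_{s+\tau(s)}$ is a linear isomorphism. The operations on $A^*$ dual to $\Delta_{\succ,s},\Delta_{\prec,s}$ are $\zeta\succ_s\eta=R_{\succ}^*(T_{\tau(s)}(\eta))\zeta-L_{\star}^*(T_s(\zeta))\eta$ and $\zeta\prec_s\eta=R_{\odot}^*(T_s(\zeta))\eta-R_{\circ}^*(T_{\tau(s)}(\eta))\zeta$. *)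

(* Defs.v *)
(* A finite-dimensional space A over a field K is modelled
   as K^n = 'rV[K]_n with standard basis e_0..e_{n-1}; A^* is also 'rV[K]_n
   via the dual basis, with pairing <zeta, x> = \sum_i zeta_i x_i.
   A 2-tensor r = \sum_{p,q} r_pq e_p (x) e_q is the matrix r : 'M[K]_n. *)
From HB Require Import structures.
From mathcomp Require Import all_boot all_order all_algebra.
Set Implicit Arguments. Unset Strict Implicit. Unset Printing Implicit Defensive.
Import Order.TTheory GRing.Theory Num.Theory.
Local Open Scope ring_scope.

Section APN.
Variables (K : fieldType) (n : nat).
Local Notation V := 'rV[K]_n.

Definition ebas (p : 'I_n) : V := delta_mx 0 p.

Definition bil (c : 'I_n -> 'I_n -> V) (x y : V) : V :=
  \sum_i \sum_j (x 0 i * y 0 j) *: c i j.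

Variables (suc prec : V -> V -> V).

Definition circ (x y : V) : V := suc x y + prec x y.
Definition odot (x y : V) : V := suc x y + prec y x.

Definition is_APN : Prop :=
  forall x y z : V,
  [/\ suc (circ x y - circ y x) z = suc y (suc x z) - suc x (suc y z),
      prec x (circ y z) = prec (suc y x) z - prec (prec x y) z - suc y (prec x z),
      suc (circ x y) z = - prec (suc x z) y,
      prec (prec x y) z = prec (prec x z) y
    & prec (circ x y - circ y x) z = suc x (circ y z) - suc y (circ x z)].

Definition Lstar (x : V) : V -> V := fun y => circ x y + circ y x.
Definition Lodot (x : V) : V -> V := fun y => suc x y + prec y x.
Definition Rsuc (x : V) : V -> V := fun y => suc y x.
Definition Rcirc (x : V) : V -> V := fun y => circ y x.
Definition Rodot (x : V) : V -> V := fun y => suc y x + prec x y.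

Definition tens2 (x y : V) : 'M[K]_n := x^T *m y.
(* (f (x) g) r for r = \sum r_pq e_p (x) e_q *)
Definition app2 (f g : V -> V) (r : 'M[K]_n) : 'M[K]_n :=
  \sum_p \sum_q r p q *: tens2 (f (ebas p)) (g (ebas q)).

Definition invariant (r : 'M[K]_n) : Prop :=
  forall x : V,
    app2 id (Lstar x) r - app2 (suc x) id r = 0 /\
    app2 (circ x) id r - app2 id (Lodot x) r = 0.

Definition tens3 (x y z : V) : {ffun 'I_n * 'I_n * 'I_n -> K} :=
  [ffun t => x 0 t.1.1 * y 0 t.1.2 * z 0 t.2].

(* APN-YBE for s = \sum_{(p,q)} a_(p,q) (x) b_(p,q), a_(p,q) = s_pq e_p, b_(p,q) = e_q *)
Definition APN_YBE (s : 'M[K]_n) : Prop :=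
  \sum_(i : 'I_n * 'I_n) \sum_(j : 'I_n * 'I_n)
    (let ai := s i.1 i.2 *: ebas i.1 in let bi := ebas i.2 in
     let aj := s j.1 j.2 *: ebas j.1 in let bj := ebas j.2 in
     tens3 (circ ai aj) bi bj + tens3 aj ai (odot bi bj)
       + tens3 ai (prec bi aj) bj) = 0.

(* T_r : A^* -> A, <T_r zeta, eta> = <r, zeta (x) eta>; in coordinates zeta *m r *)
Definition Tmap (r : 'M[K]_n) (zeta : V) : V := zeta *m r.

Definition pair (zeta x : V) : K := \sum_i zeta 0 i * x 0 i.

(* f^*(x) zeta, characterised by <f^*(x) zeta, y> = - <zeta, f(x) y> *)
Definition dualop (f : V -> V -> V) (x zeta : V) : V :=
  \row_j (- pair zeta (f x (ebas j))).

Definition factorizable (s : 'M[K]_n) : Prop :=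
  [/\ APN_YBE s, invariant (s + s^T) & bijective (Tmap (s + s^T))].

Definition suc_s (s : 'M[K]_n) (zeta eta : V) : V :=
  dualop Rsuc (Tmap s^T eta) zeta - dualop Lstar (Tmap s zeta) eta.
Definition prec_s (s : 'M[K]_n) (zeta eta : V) : V :=
  dualop Rodot (Tmap s zeta) eta - dualop Rcirc (Tmap s^T eta) zeta.

Definition dsuc (u v : V * V) : V * V := (suc u.1 v.1, suc u.2 v.2).
Definition dprec (u v : V * V) : V * V := (prec u.1 v.1, prec u.2 v.2).

Definition Tpair (s : 'M[K]_n) (zeta : V) : V * V := (Tmap s zeta, - Tmap s^T zeta).

Definition in_image (s : 'M[K]_n) (u : V * V) : Prop := exists zeta, Tpair s zeta = u.

End APN.

(* Main.v *)
Require Import Defs.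
From HB Require Import structures.
From mathcomp Require Import all_boot all_order all_algebra.
From mathcomp Require Import ring.
Set Implicit Arguments. Unset Strict Implicit. Unset Printing Implicit Defensive.
Import GRing.Theory.
Local Open Scope ring_scope.

Section Basic.
Variables (K : fieldType) (n : nat).
Local Notation V := 'rV[K]_n.

Definition linV (f : V -> V) := forall a x y, f (a *: x + y) = a *: f x + f y.

Lemma linV0 f : linV f -> f 0 = 0.
Proof.
move=> H; have e := H 1 0 0; rewrite !scale1r addr0 in e.
by apply: (addrI (f 0)); rewrite addr0 -e.
Qed.
Lemma linVD f : linV f -> forall x y, f (x + y) = f x + f y.
Proof. by move=> H x y; have := H 1 x y; rewrite !scale1r. Qed.
Lemma linVZ f : linV f -> forall a x, f (a *: x) = a *: f x.
Proof. by move=> H a x; rewrite -[a *: x]addr0 H linV0 // addr0. Qed.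
Lemma linVN f : linV f -> forall x, f (- x) = - f x.
Proof. by move=> H x; rewrite -scaleN1r linVZ // scaleN1r. Qed.
Lemma linV_sum f (I : Type) (r : seq I) (P : pred I) (g : I -> V) : linV f ->
  f (\sum_(i <- r | P i) g i) = \sum_(i <- r | P i) f (g i).
Proof. by move=> H; apply: (big_morph f (linVD H) (linV0 H)). Qed.

Lemma pairDr (z x y : V) : pair z (x + y) = pair z x + pair z y.
Proof. by rewrite /pair -big_split; apply: eq_bigr => i _; rewrite mxE mulrDr. Qed.
Lemma pairZr a (z x : V) : pair z (a *: x) = a * pair z x.
Proof. by rewrite /pair mulr_sumr; apply: eq_bigr => i _; rewrite mxE mulrCA. Qed.
Lemma pairNr (z x : V) : pair z (- x) = - pair z x.
Proof. by rewrite -scaleN1r pairZr mulN1r. Qed.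
Lemma pair_sym (z x : V) : pair z x = pair x z.
Proof. by rewrite /pair; apply: eq_bigr => i _; rewrite mulrC. Qed.
Lemma pairDl (z w x : V) : pair (z + w) x = pair z x + pair w x.
Proof. by rewrite !(pair_sym _ x) pairDr. Qed.
Lemma pairNl (z x : V) : pair (- z) x = - pair z x.
Proof. by rewrite !(pair_sym _ x) pairNr. Qed.
Lemma pair_sumr (z : V) (I : Type) (r : seq I) (P : pred I) (g : I -> V) :
  pair z (\sum_(i <- r | P i) g i) = \sum_(i <- r | P i) pair z (g i).
Proof. apply: (big_morph (pair z) (pairDr z)). by rewrite /pair big1 // => i _; rewrite mxE mulr0. Qed.
Lemma pair_ebas p (x : V) : pair x (ebas K p) = x 0 p.
Proof.
rewrite /pair (bigD1 p) //= big1 ?addr0 => [|i Hi]; first by rewrite /ebas mxE !eqxx mulr1.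
by rewrite /ebas mxE (negbTE Hi) andbF mulr0.
Qed.
Lemma pair_ext (x y : V) : (forall g, pair g x = pair g y) -> x = y.
Proof. by move=> H; apply/rowP => j; rewrite -!(pair_ebas j) !(pair_sym _ (ebas K j)) H. Qed.

Lemma Tmap_adj (r : 'M[K]_n) (g t : V) : pair g (Tmap r t) = pair t (Tmap r^T g).
Proof.
rewrite /pair /Tmap.
under eq_bigr do rewrite mxE big_distrr.
under [RHS]eq_bigr do rewrite mxE big_distrr.
rewrite exchange_big; apply: eq_bigr => i _; apply: eq_bigr => j _.
rewrite !mxE /=; ring.
Qed.

Lemma Tmap_lin (r : 'M[K]_n) : linV (Tmap r).
Proof. by move=> a x y; rewrite /Tmap mulmxDl scalemxAl. Qed.

Lemma TmapD (r1 r2 : 'M[K]_n) z : Tmap (r1 + r2) z = Tmap r1 z + Tmap r2 z.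
Proof. by rewrite /Tmap mulmxDr. Qed.

Lemma lin_expand g (v : V) : linV g -> g v = \sum_b v 0 b *: g (ebas K b).
Proof.
move=> H; rewrite {1}(row_sum_delta v) linV_sum //; apply: eq_bigr => b _.
by rewrite linVZ.
Qed.

Lemma dualopE f x (z y : V) : linV (f x) -> pair (dualop f x z) y = - pair z (f x y).
Proof.
move=> H; rewrite [in RHS](lin_expand y H) pair_sumr -sumrN {1}/pair.
by apply: eq_bigr => j _; rewrite mxE pairZr; ring.
Qed.

Definition C2 (M : 'M[K]_n) (z w : V) := \sum_p \sum_q M p q * (z 0 p * w 0 q).

Lemma C2D M N z w : C2 (M + N) z w = C2 M z w + C2 N z w.
Proof.
rewrite /C2 -big_split; apply: eq_bigr => p _; rewrite -big_split; apply: eq_bigr => q _.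
by rewrite mxE mulrDl.
Qed.
Lemma C20 z w : C2 0 z w = 0.
Proof. by rewrite /C2 big1 // => p _; rewrite big1 // => q _; rewrite mxE mul0r. Qed.
Lemma C2N M z w : C2 (- M) z w = - C2 M z w.
Proof.
rewrite /C2 -sumrN; apply: eq_bigr => p _; rewrite -sumrN; apply: eq_bigr => q _.
by rewrite mxE mulNr.
Qed.
Lemma C2Z c M z w : C2 (c *: M) z w = c * C2 M z w.
Proof.
rewrite /C2 mulr_sumr; apply: eq_bigr => p _; rewrite mulr_sumr; apply: eq_bigr => q _.
by rewrite mxE -mulrA.
Qed.
Lemma C2_sum (I : Type) (r : seq I) (P : pred I) (F : I -> 'M[K]_n) z w :
  C2 (\sum_(i <- r | P i) F i) z w = \sum_(i <- r | P i) C2 (F i) z w.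
Proof. by apply: (big_morph (fun M => C2 M z w) (fun M N => C2D M N z w) (C20 z w)). Qed.
Lemma C2_tens2 x y z w : C2 (tens2 x y) z w = pair z x * pair w y.
Proof.
rewrite /C2 /pair big_distrl; apply: eq_bigr => p _; rewrite big_distrr; apply: eq_bigr => q _.
rewrite /tens2 !mxE big_ord1 !mxE /=; ring.
Qed.
Lemma C2_app2 f g r z w : C2 (app2 f g r) z w =
  \sum_a \sum_b r a b * (pair z (f (ebas K a)) * pair w (g (ebas K b))).
Proof.
rewrite /app2 C2_sum; apply: eq_bigr => a _; rewrite C2_sum; apply: eq_bigr => b _.
by rewrite C2Z C2_tens2.
Qed.
Lemma C2_idl g r z w : linV g -> C2 (app2 id g r) z w = pair w (g (Tmap r z)).
Proof.
move=> H; rewrite C2_app2 [in RHS](lin_expand _ H) pair_sumr exchange_big.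
apply: eq_bigr => b _; rewrite pairZr /Tmap mxE big_distrl; apply: eq_bigr => a _ /=.
rewrite pair_ebas; ring.
Qed.
Lemma C2_idr f r z w : linV f -> C2 (app2 f id r) z w = pair z (f (Tmap r^T w)).
Proof.
move=> H; rewrite C2_app2 [in RHS](lin_expand _ H) pair_sumr.
apply: eq_bigr => a _; rewrite pairZr /Tmap mxE big_distrl; apply: eq_bigr => b _ /=.
rewrite pair_ebas !mxE; ring.
Qed.

Definition linK (f : V -> K) := forall a x y, f (a *: x + y) = a * f x + f y.
Lemma linK0 f : linK f -> f 0 = 0.
Proof.
move=> H; have e := H 1 0 0; rewrite !scale1r addr0 mul1r in e.
by apply: (addrI (f 0)); rewrite addr0 -e.
Qed.
Lemma linKD f : linK f -> forall x y, f (x + y) = f x + f y.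
Proof. by move=> H x y; have := H 1 x y; rewrite !scale1r mul1r. Qed.
Lemma linK_sum f (I : finType) (c : I -> K) (u : I -> V) : linK f ->
  f (\sum_i c i *: u i) = \sum_i c i * f (u i).
Proof.
move=> H; rewrite (big_morph f (linKD H) (linK0 H)); apply: eq_bigr => i _.
by have := H (c i) (u i) 0; rewrite addr0 linK0 // addr0.
Qed.
Lemma bisum (I J : finType) (f : V -> V -> K) (u : I -> V) (v : J -> V) (c : I -> K) (d : J -> K) :
  (forall y, linK (f^~ y)) -> (forall x, linK (f x)) ->
  \sum_i \sum_j f (u i) (v j) * (c i * d j) = f (\sum_i c i *: u i) (\sum_j d j *: v j).
Proof.
move=> Hl Hr; have e1 := linK_sum c u (Hl (\sum_j d j *: v j)); rewrite /= in e1.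
rewrite e1; apply: eq_bigr => i _.
have e2 := linK_sum d v (Hr (u i)); rewrite /= in e2.
rewrite e2 mulr_sumr; apply: eq_bigr => j _; ring.
Qed.
Lemma pair_linK z g : linV g -> linK (fun y => pair z (g y)).
Proof. by move=> H a x y; rewrite H pairDr pairZr. Qed.
Lemma linV_add f g : linV f -> linV g -> linV (fun x => f x + g x).
Proof. by move=> Hf Hg a x y; rewrite Hf Hg scalerDr; rewrite -!addrA; congr (_ + _); rewrite addrCA. Qed.

Lemma TsE (s : 'M[K]_n) z :
  \sum_(i : 'I_n * 'I_n) pair z (s i.1 i.2 *: ebas K i.1) *: ebas K i.2 = Tmap s z.
Proof.
symmetry; rewrite {1}(row_sum_delta (Tmap s z)).
under eq_bigr do rewrite /Tmap mxE scaler_suml.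
rewrite exchange_big pair_bigA /=; apply: eq_bigr => [[p q]] _ /=.
by rewrite pairZr pair_ebas mulrC.
Qed.
Lemma TtE (s : 'M[K]_n) z :
  \sum_(i : 'I_n * 'I_n) pair z (ebas K i.2) *: (s i.1 i.2 *: ebas K i.1) = Tmap s^T z.
Proof.
symmetry; rewrite {1}(row_sum_delta (Tmap s^T z)).
under eq_bigr do rewrite /Tmap mxE scaler_suml.
rewrite pair_bigA /=; apply: eq_bigr => [[p q]] _ /=.
by rewrite pair_ebas scalerA !mxE mulrC.
Qed.

Definition C3 (F : {ffun 'I_n * 'I_n * 'I_n -> K}) (z w u : V) :=
  \sum_t F t * (z 0 t.1.1 * w 0 t.1.2 * u 0 t.2).
Lemma C3D F G z w u : C3 (F + G) z w u = C3 F z w u + C3 G z w u.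
Proof. by rewrite /C3 -big_split; apply: eq_bigr => t _; rewrite ffunE mulrDl. Qed.
Lemma C30 z w u : C3 0 z w u = 0.
Proof. by rewrite /C3 big1 // => t _; rewrite ffunE mul0r. Qed.
Lemma C3_sum (I : Type) (r : seq I) (P : pred I) (F : I -> {ffun 'I_n * 'I_n * 'I_n -> K}) z w u :
  C3 (\sum_(i <- r | P i) F i) z w u = \sum_(i <- r | P i) C3 (F i) z w u.
Proof. by apply: (big_morph (fun M => C3 M z w u) (fun M N => C3D M N z w u) (C30 z w u)). Qed.
Lemma C3_tens3 x y v z w u : C3 (tens3 x y v) z w u = pair z x * pair w y * pair u v.
Proof.
rewrite /C3 /pair big_distrlr /= mulr_suml.
under [RHS]eq_bigr do rewrite mulr_suml.
rewrite pair_bigA /=. under [RHS]eq_bigr do rewrite mulr_sumr.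
rewrite pair_bigA /=; apply: eq_bigr => t _; rewrite ffunE /=; ring.
Qed.

End Basic.

Section Abs.
Variables (K : fieldType) (n : nat) (suc prec : 'rV[K]_n -> 'rV[K]_n -> 'rV[K]_n).
Local Notation V := 'rV[K]_n.
Hypotheses (sucl : forall y, linV (suc ^~ y)) (sucr : forall x, linV (suc x))
  (precl : forall y, linV (prec ^~ y)) (precr : forall x, linV (prec x)).

Lemma sucDl x y z : suc (x + y) z = suc x z + suc y z. Proof. exact: linVD (sucl z) x y. Qed.
Lemma sucDr x y z : suc z (x + y) = suc z x + suc z y. Proof. exact: linVD (sucr z) x y. Qed.
Lemma sucNl x z : suc (- x) z = - suc x z. Proof. exact: linVN (sucl z) x. Qed.
Lemma sucNr x z : suc z (- x) = - suc z x. Proof. exact: linVN (sucr z) x. Qed.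
Lemma precDl x y z : prec (x + y) z = prec x z + prec y z. Proof. exact: linVD (precl z) x y. Qed.
Lemma precDr x y z : prec z (x + y) = prec z x + prec z y. Proof. exact: linVD (precr z) x y. Qed.
Lemma precNl x z : prec (- x) z = - prec x z. Proof. exact: linVN (precl z) x. Qed.
Lemma precNr x z : prec z (- x) = - prec z x. Proof. exact: linVN (precr z) x. Qed.

Lemma circ_l y : linV (circ suc prec ^~ y). Proof. exact: linV_add (sucl y) (precl y). Qed.
Lemma circ_r x : linV (circ suc prec x). Proof. exact: linV_add (sucr x) (precr x). Qed.
Lemma odot_l y : linV (odot suc prec ^~ y). Proof. exact: linV_add (sucl y) (precr y). Qed.
Lemma odot_r x : linV (odot suc prec x). Proof. exact: linV_add (sucr x) (precl x). Qed.
Lemma Lstar_lin x : linV (Lstar suc prec x). Proof. exact: linV_add (circ_r x) (circ_l x). Qed.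
Lemma Lodot_lin x : linV (Lodot suc prec x). Proof. exact: linV_add (sucr x) (precl x). Qed.
Lemma Rsuc_lin x : linV (Rsuc suc x). Proof. exact: (sucl x). Qed.
Lemma Rcirc_lin x : linV (Rcirc suc prec x). Proof. exact: (circ_l x). Qed.
Lemma Rodot_lin x : linV (Rodot suc prec x). Proof. exact: linV_add (sucl x) (precr x). Qed.

Variable s : 'M[K]_n.
Local Notation S := (Tmap s).
Local Notation S' := (Tmap s^T).
Local Notation SI := (Tmap (s + s^T)).

Lemma Ylem : APN_YBE suc prec s -> forall z w u : V,
  pair z (circ suc prec (S' w) (S' u)) + pair u (odot suc prec (S w) (S z))
  + pair w (prec (S z) (S' u)) = 0.
Proof.
move=> H z w u.
have := congr1 (fun F => C3 F z w u) H; rewrite /= C30 C3_sum.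
under eq_bigr => i _ do (rewrite C3_sum; under eq_bigr => j _ do rewrite !C3D !C3_tens3).
under eq_bigr do rewrite !big_split; rewrite !big_split /= => E.
rewrite -[RHS]E; congr (_ + _ + _).
- rewrite -(TtE s w) -(TtE s u).
  apply: etrans; first exact: esym (@bisum _ _ _ _ (fun x y => pair z (circ suc prec x y)) _ _ _ _
      (fun y => pair_linK z (circ_l y)) (fun x => pair_linK z (circ_r x))).
  by apply: eq_bigr => i _; apply: eq_bigr => j _ /=; ring.
- rewrite -(TsE s w) -(TsE s z).
  apply: etrans; first exact: esym (@bisum _ _ _ _ (fun x y => pair u (odot suc prec x y)) _ _ _ _
      (fun y => pair_linK u (odot_l y)) (fun x => pair_linK u (odot_r x))).
  by apply: eq_bigr => i _; apply: eq_bigr => j _ /=; ring.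
- rewrite -(TsE s z) -(TtE s u).
  apply: etrans; first exact: esym (@bisum _ _ _ _ (fun x y => pair w (prec x y)) _ _ _ _
      (fun y => pair_linK w (precl y)) (fun x => pair_linK w (precr x))).
  by apply: eq_bigr => i _; apply: eq_bigr => j _ /=; ring.
Qed.

Lemma trI : (s + s^T)^T = s + s^T.
Proof. by rewrite linearD /= trmxK addrC. Qed.

Lemma I1lem : Defs.invariant suc prec (s + s^T) -> forall x z w : V,
  pair w (Lstar suc prec x (SI z)) = pair z (suc x (SI w)).
Proof.
move=> H x z w; have [H1 _] := H x.
have := congr1 (fun M => C2 M z w) H1; rewrite /= C2D C2N C20 (C2_idl _ _ _ (Lstar_lin x)) (C2_idr _ _ _ (sucr x)) trI.
by move/eqP; rewrite subr_eq0 => /eqP.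
Qed.

Lemma I2lem : Defs.invariant suc prec (s + s^T) -> forall x z w : V,
  pair z (circ suc prec x (SI w)) = pair w (Lodot suc prec x (SI z)).
Proof.
move=> H x z w; have [_ H2] := H x.
have := congr1 (fun M => C2 M z w) H2; rewrite /= C2D C2N C20 (C2_idl _ _ _ (Lodot_lin x)) (C2_idr _ _ _ (circ_r x)) trI.
by move/eqP; rewrite subr_eq0 => /eqP.
Qed.

Lemma lc (L R A B c : K) : A = B -> L = R + c * (A - B) -> L = R.
Proof. by move=> -> ->; rewrite subrr mulr0 addr0. Qed.
Arguments lc {L R A B} c.

Ltac expand := rewrite /Lstar /Lodot /Rodot /Rcirc /Rsuc /circ /odot /=;
  do 3 rewrite ?sucDl ?sucDr ?sucNl ?sucNr ?precDl ?precDr ?precNl ?precNr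
     ?opprD ?opprK ?pairDr ?pairNr ?pairDl ?pairNl.

Hypothesis Hinv : Defs.invariant suc prec (s + s^T).

Lemma I3lem x (z w : V) : pair w (circ suc prec (SI z) x) + pair z (prec (SI w) x) = 0.
Proof.
apply: (lc 1 (I1lem Hinv x z w)); apply: (lc (-1) (I2lem Hinv x w z)).
expand; ring.
Qed.

Lemma L0lem (o z g : V) :
  pair z (suc (SI g) (SI o) + prec (SI o) (SI g)) + pair g (prec (SI o) (SI z)) = 0.
Proof.
apply: (lc 1 (I3lem (SI g) z o)); apply: (lc 1 (I3lem (SI z) g o)).
apply: (lc (-1) (I1lem Hinv (SI g) z o)).
expand; ring.
Qed.

Lemma L1lem (o z g : V) : pair z (suc (SI g) (SI o)) = pair g (suc (SI z) (SI o)).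
Proof.
apply: (lc (-1) (I1lem Hinv (SI g) z o)); apply: (lc 1 (I1lem Hinv (SI z) g o)).
expand; ring.
Qed.

Hypothesis HY : APN_YBE suc prec s.
Hypothesis Hs : forall y : V, exists o, SI o = y.

Lemma SIE z : SI z = S z + S' z. Proof. exact: TmapD. Qed.

Lemma hom_suc z w : S (suc_s suc prec s z w) = suc (S z) (S w).
Proof.
apply: pair_ext => g; rewrite Tmap_adj /suc_s pairDl pairNl.
rewrite (dualopE _ _ (Rsuc_lin _)) (dualopE _ _ (Lstar_lin _)).
have [o ho] := Hs (S w).
have h4 := L0lem o z g; rewrite ho in h4.
apply: (lc 1 (I1lem Hinv (S' g) z w)); apply: (lc (-1) (Ylem HY w g z)).
apply: (lc (-1) (Ylem HY w z g)); apply: (lc 1 h4).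
rewrite !SIE; expand; ring.
Qed.

Lemma hom_prec z w : S (prec_s suc prec s z w) = prec (S z) (S w).
Proof.
apply: pair_ext => g; rewrite Tmap_adj /prec_s pairDl pairNl.
rewrite (dualopE _ _ (Rodot_lin _)) (dualopE _ _ (Rcirc_lin _)).
have [o ho] := Hs (S z).
have h4 := L0lem o w g; rewrite ho in h4.
apply: (lc 1 (Ylem HY z g w)); apply: (lc (-1) h4).
rewrite !SIE; expand; ring.
Qed.

Lemma pS'S (t g : V) : pair g (- S' t) = pair t (S' g) - pair t (SI g).
Proof.
by rewrite pairNr Tmap_adj trmxK SIE pairDr; ring.
Qed.

Lemma hom_suc' z w : - S' (suc_s suc prec s z w) = suc (- S' z) (- S' w).
Proof.
apply: pair_ext => g; rewrite pS'S -Tmap_adj hom_suc.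
rewrite /suc_s pairDl pairNl.
rewrite (dualopE _ _ (Rsuc_lin _)) (dualopE _ _ (Lstar_lin _)).
have [o ho] := Hs (S' w).
have h2 := L1lem o z g; rewrite ho in h2.
apply: (lc (-1) (I1lem Hinv (S z) g w)); apply: (lc 1 h2).
rewrite !SIE; expand; ring.
Qed.

Lemma hom_prec' z w : - S' (prec_s suc prec s z w) = prec (- S' z) (- S' w).
Proof.
apply: pair_ext => g; rewrite pS'S -Tmap_adj hom_prec.
rewrite /prec_s pairDl pairNl.
rewrite (dualopE _ _ (Rodot_lin _)) (dualopE _ _ (Rcirc_lin _)).
have [o ho] := Hs (S z).
have h1 := L0lem o w g; rewrite ho in h1.
apply: (lc 1 h1); apply: (lc (-1) (I3lem (S' w) g z)).
rewrite !SIE; expand; ring.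
Qed.

End Abs.

Lemma bil_l (K : fieldType) (n : nat) (c : 'I_n -> 'I_n -> 'rV[K]_n) y : linV (bil c ^~ y).
Proof.
move=> a x x'; rewrite /bil scaler_sumr -big_split; apply: eq_bigr => i _.
rewrite scaler_sumr -big_split; apply: eq_bigr => j _.
by rewrite !mxE mulrDl scalerDl scalerA mulrA.
Qed.
Lemma bil_r (K : fieldType) (n : nat) (c : 'I_n -> 'I_n -> 'rV[K]_n) x : linV (bil c x).
Proof.
move=> a y y'; rewrite /bil scaler_sumr -big_split; apply: eq_bigr => i _.
rewrite scaler_sumr -big_split; apply: eq_bigr => j _.
by rewrite !mxE mulrDr scalerDl scalerA mulrCA.
Qed.

Unset Implicit Arguments.
Set Strict Implicit.

Theorem mainTheorem18 (K : fieldType) (n : nat)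
    (csuc cprec : 'I_n -> 'I_n -> 'rV[K]_n) (s : 'M[K]_n) :
  let suc := bil csuc in
  let prec := bil cprec in
  is_APN suc prec ->
  factorizable suc prec s ->
  (* Im(T_s (+) T_tau(s)) is an anti-pre-Novikov subalgebra of A (+) A *)
  (forall u v, in_image s u -> in_image s v ->
     in_image s (dsuc suc u v) /\ in_image s (dprec prec u v)) /\
  (* ... isomorphic to (A^*, suc_s, prec_s) *)
  (exists psi : 'rV[K]_n -> 'rV[K]_n * 'rV[K]_n,
     [/\ forall (a : K) (z w : 'rV[K]_n), psi (a *: z + w) = (a *: (psi z).1 + (psi w).1, a *: (psi z).2 + (psi w).2),
         injective psi,
         forall u, in_image s u <-> exists z, psi z = u,
         forall z w, psi (suc_s suc prec s z w) = dsuc suc (psi z) (psi w)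
       & forall z w, psi (prec_s suc prec s z w) = dprec prec (psi z) (psi w)]) /\
  (* unique decomposition x = x1 - x2 with (x1, x2) in the image *)
  (forall x : 'rV[K]_n, exists! u : 'rV[K]_n * 'rV[K]_n,
     in_image s u /\ x = u.1 - u.2).
Proof.
move=> suc prec _ [HY HI Hbij].
have sucl : forall y, linV (suc ^~ y) by move=> y; exact: bil_l.
have sucr : forall x, linV (suc x) by move=> x; exact: bil_r.
have precl : forall y, linV (prec ^~ y) by move=> y; exact: bil_l.
have precr : forall x, linV (prec x) by move=> x; exact: bil_r.
have [g c1 c2] := Hbij.
have Hs : forall y, exists o, Tmap (s + s^T) o = y by move=> y; exists (g y); exact: c2.
have hs := hom_suc sucl sucr precl precr HI HY Hs.
have hp := hom_prec sucl sucr precl precr HI HY Hs.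
have hs' := hom_suc' sucl sucr precl precr HI HY Hs.
have hp' := hom_prec' sucl sucr precl precr HI HY Hs.
split; [|split].
- move=> u v [z <-] [w <-]; split.
  + by exists (suc_s suc prec s z w); rewrite /Tpair /dsuc /= hs hs'.
  + by exists (prec_s suc prec s z w); rewrite /Tpair /dprec /= hp hp'.
- exists (Tpair s); split.
  + by move=> a z w; rewrite /Tpair /= /Tmap !mulmxDl opprD scalerN -!scalemxAl.
  + move=> z w [e1 /oppr_inj e2].
    by rewrite -[z]c1 -[w]c1 !TmapD e1 e2.
  + by [].
  + by move=> z w; rewrite /Tpair /dsuc /= hs hs'.
  + by move=> z w; rewrite /Tpair /dprec /= hp hp'.
- move=> x; exists (Tpair s (g x)); split.
  + split; first by exists (g x).
    by rewrite /Tpair /= opprK -TmapD c2.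
  + move=> u [[z <-] ->].
    by rewrite /Tpair /= opprK -TmapD c1.
Qed.
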